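(* Let $\mathcal{P}_{\mathrm{con}}$, $\mathcal{Q}_{\mathrm{con}}$ and $\mathcal{R}_{\mathrm{con}}$ denote the sets of isomorphism classes of finite connected permutation racks, finite connected quandles, and finite connected racks, respectively. The cartesian product induces a well-defined injective map $$\mathcal{P}_{\mathrm{con}}\times\mathcal{Q}_{\mathrm{con}}\longrightarrow\mathcal{R}_{\mathrm{con}},\qquad([C],[Q])\longmapsto[C\times Q].$$
   Context: A rack is a set $R$ with a binary operation $\rhd$ such that every left multiplication $\ell_a\colon b\mapsto a\rhd b$ is a bijection and $a\rhd(b\rhd c)=(a\rhd b)\rhd(a\rhd c)$ for all $a,b,c$; a quandle is a rack with $a\rhd a=a$ for all $a$. A permutation rack is a set $R$ with a permutation $\pi$ of $R$ and operation $a\rhd b=\pi(b)$ for all $a,b$. The product of racks is the cartesian product with componentwise operation. The inner automorphism group $\mathrm{Inn}(R)$ is the subgroup of the symmetric group on $R$ generated by all $\ell_a$; a rack is connected if it is non-empty and $\mathrm{Inn}(R)$ acts transitively on $R$. *)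

(* Defs.v *)
From mathcomp Require Import all_boot all_fingroup.
Set Implicit Arguments. Unset Strict Implicit. Unset Printing Implicit Defensive.

Record finMagma := FinMagma { fm_T :> finType; fm_op : fm_T -> fm_T -> fm_T }.

Section Racks.
Variable R : finMagma.
Local Notation op := (@fm_op R).

Definition is_rack : Prop :=
  (forall a : R, bijective (op a)) /\
  (forall a b c : R, op a (op b c) = op (op a b) (op a c)).

Definition is_quandle : Prop := is_rack /\ (forall a : R, op a a = a).

Definition is_perm_rack : Prop :=
  exists pi : R -> R, bijective pi /\ forall a b : R, op a b = pi b.

Definition lmul_set : {set {perm R}} :=
  [set s : {perm R} | [exists a : R, [forall b : R, s b == op a b]]].

Definition Inn : {set {perm R}} := <<lmul_set>>%g.

Definition connected : Prop :=
  0 < #|R| /\ [transitive Inn, on [set: R] | 'P]%g.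
End Racks.

Definition prod_magma (R S : finMagma) : finMagma :=
  @FinMagma (R * S)%type (fun x y => (fm_op x.1 y.1, fm_op x.2 y.2)).

Definition rack_iso (R S : finMagma) : Prop :=
  exists f : R -> S, bijective f /\
    forall a b : R, f (fm_op a b) = fm_op (f a) (f b).

(* Main.v *)
Require Import Defs.
From mathcomp Require Import all_boot all_fingroup.
Set Implicit Arguments. Unset Strict Implicit. Unset Printing Implicit Defensive.

Lemma conn_closed (R : finMagma) : connected R -> forall S : {set R},
  (forall a x, x \in S -> fm_op a x \in S) -> forall x0 y, x0 \in S -> y \in S.
Proof.
move=> [_ Htr] S HS x0 y Hx0.
have [g gI ->] := atransP2 Htr (in_setT x0) (in_setT y).
have sub : Inn R \subset 'N(S | 'P)%g.
  rewrite /Inn gen_subG; apply/subsetP => s; rewrite inE => /existsP [a /forallP Ha].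
  rewrite inE in_setT /= inE.
  apply/subsetP => x xS; rewrite inE /= apermE (eqP (Ha x)); exact: HS.
by rewrite (astabs_act _ (subsetP sub g gI)).
Qed.

Lemma surj_bij (X Y : finType) (f : X -> Y) (g : Y -> X) :
  (forall y, exists x, f x = y) -> (forall x, exists y, g y = x) -> bijective f.
Proof.
move=> sf sg.
have hs y : exists x, f x == y by have [x <-] := sf y; exists x.
have hs' x : exists y, g y == x by have [y <-] := sg x; exists y.
pose h y := xchoose (hs y). pose h' x := xchoose (hs' x).
have fh y : f (h y) = y by apply/eqP; exact: (xchooseP (hs y)).
have gh x : g (h' x) = x by apply/eqP; exact: (xchooseP (hs' x)).
have hinj : injective h by move=> y1 y2 e; rewrite -(fh y1) -(fh y2) e.
have h'inj : injective h' by move=> y1 y2 e; rewrite -(gh y1) -(gh y2) e.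
have [k hk kh] := @inj_card_bij _ _ h hinj (@leq_card _ _ h' h'inj).
exists h => // x.
by rewrite -{1}(kh x) fh kh.
Qed.

Lemma perm_rack_rack (C : finMagma) : is_perm_rack C -> is_rack C.
Proof.
move=> [pi [[pinv h1 h2] hop]]; split.
  by move=> a; exists pinv => x; rewrite hop ?h1 ?h2.
by move=> a b c; rewrite !hop.
Qed.

Lemma perm_op (C : finMagma) : is_perm_rack C -> forall a b : C, fm_op a b = fm_op b b.
Proof. by move=> [pi [_ hop]] a b; rewrite !hop. Qed.

Lemma prod_rack (R S : finMagma) : is_rack R -> is_rack S -> is_rack (prod_magma R S).
Proof.
move=> [b1 d1] [b2 d2]; split.
  move=> [a1 a2]; have [g1 c1 c1'] := b1 a1; have [g2 c2 c2'] := b2 a2.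
  exists (fun y : R * S => (g1 y.1, g2 y.2)) => [[x1 x2]|[x1 x2]] /=.
    by rewrite c1 c2.
  by rewrite c1' c2'.
by move=> [a1 a2] [b1' b2'] [c1 c2] /=; rewrite d1 d2.
Qed.

Lemma iso_sym (R S : finMagma) : rack_iso R S -> rack_iso S R.
Proof.
move=> [F [[G c1 c2] hF]]; exists G; split; first by exists F.
by move=> a b; rewrite -{1}(c2 a) -{1}(c2 b) -hF c1.
Qed.

Lemma prod_conn (C Q : finMagma) : is_perm_rack C -> connected C -> is_quandle Q -> connected Q ->
  connected (prod_magma C Q).
Proof.
move=> pC cC [[bQ dQ] iQ] cQ.
have rP := prod_rack (perm_rack_rack pC) (conj bQ dQ).
have [c0 _] : exists c : C, c \in C by apply/card_gt0P; case: cC.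
have [q0 _] : exists q : Q, q \in Q by apply/card_gt0P; case: cQ.
split.
  rewrite /= card_prod muln_gt0; case: cC => -> _; by case: cQ => -> _.
set P := prod_magma C Q.
set O := orbit 'P%act (Inn P) ((c0, q0) : P).
have Ocl : forall (a x : P), x \in O -> fm_op a x \in O.
  move=> a x /orbitP [g gI <-].
  have ia : injective (@fm_op P a) by apply: bij_inj; case: rP => h _; exact: h.
  apply/orbitP; exists (g * perm ia)%g.
    rewrite groupM // mem_gen // inE; apply/existsP; exists a; apply/forallP => b.
    by rewrite permE.
  by rewrite actM /= apermE permE.
have spread : forall c q, (c, q) \in O -> forall c', ((c', q) : P) \in O.
  move=> c q cqO c'.
  pose S := [set d : C | ((d, q) : P) \in O].
  have := @conn_closed C cC S _ c c'; rewrite !inE; apply => //.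
  move=> a d; rewrite !inE => dO.
  have := Ocl ((d, q) : P) _ dO; rewrite /= iQ.
  by rewrite (perm_op pC a d).
apply/imsetP; exists ((c0, q0) : P) => //.
symmetry; apply/setP => x; rewrite in_setT; case: x => c q.
pose S' := [set r : Q | [forall d : C, ((d, r) : P) \in O]].
have : q \in S'.
  apply: (@conn_closed Q cQ S' _ q0 q).
    move=> a r; rewrite !inE => /forallP rO; apply/forallP => d.
    apply: (spread (fm_op c0 c0)).
    exact: (Ocl ((c0, a) : P) _ (rO c0)).
  rewrite inE; apply/forallP => d; apply: (spread c0); exact: orbit_refl.
move=> Hq; have := Hq; rewrite inE => /forallP; apply.
Qed.

Lemma half (C Q C' Q' : finMagma) :
  is_perm_rack C -> connected C -> is_quandle Q -> connected Q ->
  is_perm_rack C' -> connected C' -> is_quandle Q' ->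
  rack_iso (prod_magma C Q) (prod_magma C' Q') ->
  (exists f : C -> C', (forall a b, f (fm_op a b) = fm_op (f a) (f b)) /\
      forall y, exists x, f x = y) /\
  (exists g : Q -> Q', (forall a b, g (fm_op a b) = fm_op (g a) (g b)) /\
      forall y, exists x, g x = y).
Proof.
move=> pC cC [_ iQ] cQ pC' cC' [_ iQ'] [F [[G FG GF] hF]].
have [c0 _] : exists c : C, c \in C by apply/card_gt0P; case: cC.
have key : forall (c : C) (q : Q), F (fm_op c c, q) =
    (fm_op (F (c, q)).1 (F (c, q)).1, (F (c, q)).2).
  move=> c q; have := hF ((c, q) : prod_magma C Q) (c, q) => /=; rewrite iQ => ->.
  by case: (F (c, q)) => y1 y2 /=; rewrite iQ'.
have inv : forall (c : C) (q : Q), (F (c, q)).2 = (F (c0, q)).2.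
  move=> c q.
  pose S := [set d : C | (F (d, q)).2 == (F (c0, q)).2].
  have := @conn_closed C cC S _ c0 c; rewrite !inE => H; apply/eqP; apply: H => //.
  by move=> a d; rewrite !inE (perm_op pC a d) key.
have [q0 _] : exists q : Q, q \in Q by apply/card_gt0P; case: cQ.
split.
  exists (fun c => (F (c, q0)).1); split.
    by move=> a b /=; rewrite (perm_op pC a b) key (perm_op pC' _ (F (b, q0)).1).
  move=> y.
  pose S := [set y' : C' | [exists c, (F (c, q0)).1 == y']].
  have := @conn_closed C' cC' S _ (F (c0, q0)).1 y; rewrite !inE => H.
  have /existsP [c /eqP <-] : [exists c, (F (c, q0)).1 == y].
    apply: H; last by apply/existsP; exists c0.
    move=> a d; rewrite !inE => /existsP [c /eqP <-]; apply/existsP; exists (fm_op c c).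
    by rewrite key (perm_op pC' a).
  by exists c.
exists (fun q => (F (c0, q)).2); split.
  move=> a b; have := hF ((c0, a) : prod_magma C Q) (c0, b) => /=.
  by rewrite -(inv (fm_op c0 c0) (fm_op a b)) => ->.
move=> y; case E: (G ((F (c0, q0)).1, y)) => [c q].
exists q; rewrite -(inv c) -E.
by rewrite (GF ((F (c0, q0)).1, y)).
Qed.

Theorem theorem7p11 :
  forall (C Q : finMagma),
    is_perm_rack C -> connected C -> is_quandle Q -> connected Q ->
    (* the product lands in finite connected racks *)
    (is_rack (prod_magma C Q) /\ connected (prod_magma C Q)) /\
    forall (C' Q' : finMagma),
      is_perm_rack C' -> connected C' -> is_quandle Q' -> connected Q' ->
      (* well-defined on isomorphism classes *)
      (rack_iso C C' -> rack_iso Q Q' ->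
         rack_iso (prod_magma C Q) (prod_magma C' Q')) /\
      (* injective *)
      (rack_iso (prod_magma C Q) (prod_magma C' Q') ->
         rack_iso C C' /\ rack_iso Q Q').
Proof.
move=> C Q pC cC qQ cQ; split.
  split; last exact: prod_conn.
  by apply: prod_rack; [exact: perm_rack_rack | case: qQ].
move=> C' Q' pC' cC' qQ' cQ'; split.
  move=> [f [[f' f1 f2] hf]] [g [[g' g1 g2] hg]].
  exists (fun x : C * Q => (f x.1, g x.2)); split.
    exists (fun y : C' * Q' => (f' y.1, g' y.2)) => -[x1 x2] /=.
      by rewrite f1 g1.
    by rewrite f2 g2.
  by move=> [a1 a2] [b1 b2] /=; rewrite hf hg.
move=> iso.
have [[f [hf sf]] [g [hg sg]]] := half pC cC qQ cQ pC' cC' qQ' iso.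
have [[f' [_ sf']] [g' [_ sg']]] := half pC' cC' qQ' cQ' pC cC qQ (iso_sym iso).
split.
  by exists f; split => //; exact: (surj_bij sf sf').
by exists g; split => //; exact: (surj_bij sg sg').
Qed.
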